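(* Let $(A,+,\circ)$ be a $*$-nilpotent skew brace of nilpotent type and let $I$ be a nonzero ideal of $A$. Then $\zeta(A)\cap I\neq 0$. In particular, if $A\neq 0$ then $\zeta(A)\neq0$.
   Context: A skew brace is a triple $(A,+,\circ)$ where $(A,+)$ and $(A,\circ)$ are groups (not necessarily abelian; $+$ is written additively) such that $x\circ(y+z)=(x\circ y)-x+(x\circ z)$ for all $x,y,z\in A$; the common neutral element is $0$. It is of nilpotent type if $(A,+)$ is nilpotent. Let $\lambda_x(y)=-x+(x\circ y)$ and $x*y=\lambda_x(y)-y$; $[x,y]_+=x+y-x-y$. For subsets $X,Y$, $X*Y$ is the subgroup of $(A,+)$ generated by $\{x*y\}$. Left and right series: $A^1=A$, $A^{n+1}=A*A^n$; $A^{(1)}=A$, $A^{(n+1)}=A^{(n)}*A$; $A$ is $*$-nilpotent if $A^n=0$ and $A^{(m)}=0$ for some $n,m$. An ideal is a subgroup $I$ of $(A,+)$ with $\lambda_a(I)\subseteq I$ for all $a\in A$ that is normal in both $(A,+)$ and $(A,\circ)$. The center is $\zeta(A)=\{x\in A: x*y=y*x=[x,y]_+=0\ \forall y\in A\}$. *)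

(* Defs.v *)
From Stdlib Require Import Arith.

Set Implicit Arguments.

Record skew_brace := SkewBrace {
  car :> Type;
  add : car -> car -> car;
  zero : car;
  opp : car -> car;
  circ : car -> car -> car;
  cinv : car -> car;
  addA : forall x y z, add x (add y z) = add (add x y) z;
  add0r : forall x, add zero x = x;
  addr0 : forall x, add x zero = x;
  addNr : forall x, add (opp x) x = zero;
  addrN : forall x, add x (opp x) = zero;
  circA : forall x y z, circ x (circ y z) = circ (circ x y) z;
  circ0r : forall x, circ zero x = x;
  circr0 : forall x, circ x zero = x;
  circVr : forall x, circ (cinv x) x = zero;
  circrV : forall x, circ x (cinv x) = zero;
  brace_compat : forall x y z,
    circ x (add y z) = add (add (circ x y) (opp x)) (circ x z)
}.

Section Defs.
Variable A : skew_brace.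

Local Notation "x + y" := (@add A x y).
Local Notation "- x" := (@opp A x).
Local Notation "x - y" := (@add A x (@opp A y)).
Local Notation "0" := (zero A).

Definition lam (x y : A) : A := - x + @circ A x y.
Definition star (x y : A) : A := lam x y - y.
Definition comm_add (x y : A) : A := x + y - x - y.

Definition is_add_subgroup (S : A -> Prop) : Prop :=
  S 0 /\ (forall x y, S x -> S y -> S (x + y)) /\ (forall x, S x -> S (- x)).

Definition gen_add (X : A -> Prop) : A -> Prop :=
  fun z => forall S, is_add_subgroup S -> (forall x, X x -> S x) -> S z.

Definition star_set (X Y : A -> Prop) : A -> Prop :=
  gen_add (fun z => exists x y, X x /\ Y y /\ z = star x y).

Definition comm_set (X Y : A -> Prop) : A -> Prop :=
  gen_add (fun z => exists x y, X x /\ Y y /\ z = comm_add x y).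

Definition full_set : A -> Prop := fun _ => True.
Definition is_trivial (S : A -> Prop) : Prop := forall x, S x -> x = 0.

Fixpoint lcs (n : nat) : A -> Prop :=
  match n with
  | O => full_set
  | S m => match m with O => full_set | _ => comm_set full_set (lcs m) end
  end.

Definition nilpotent_type : Prop := exists n, is_trivial (lcs n).

(** left series A^1 = A, A^{n+1} = A * A^n   (index 0 also gives A) *)
Fixpoint left_series (n : nat) : A -> Prop :=
  match n with
  | O => full_set
  | S m => match m with O => full_set | _ => star_set full_set (left_series m) end
  end.

Fixpoint right_series (n : nat) : A -> Prop :=
  match n with
  | O => full_set
  | S m => match m with O => full_set | _ => star_set (right_series m) full_set end
  end.

Definition star_nilpotent : Prop :=
  (exists n, is_trivial (left_series n)) /\ (exists m, is_trivial (right_series m)).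

Definition is_ideal (I : A -> Prop) : Prop :=
  is_add_subgroup I /\
  (forall a x, I x -> I (lam a x)) /\
  (forall a x, I x -> I (a + x - a)) /\
  (forall a x, I x -> I (@circ A (@circ A a x) (@cinv A a))).

Definition center (x : A) : Prop :=
  forall y, star x y = 0 /\ star y x = 0 /\ comm_add x y = 0.

End Defs.

(* Main.v *)
Require Import Defs.
From Stdlib Require Import Classical Arith Lia.

Arguments add {_}.
Arguments opp {_}.
Arguments circ {_}.
Arguments cinv {_}.
Arguments addA {_}.
Arguments add0r {_}.
Arguments addr0 {_}.
Arguments addNr {_}.
Arguments addrN {_}.
Arguments circA {_}.
Arguments circ0r {_}.
Arguments circr0 {_}.
Arguments circVr {_}.
Arguments circrV {_}.
Arguments brace_compat {_}.
Arguments lam {_}.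
Arguments star {_}.
Arguments comm_add {_}.
Declare Scope sb_scope.
Local Notation "x + y" := (@add _ x y) : sb_scope.
Local Notation "- x" := (@opp _ x) : sb_scope.
Local Notation "x ** y" := (@circ _ x y) (at level 40) : sb_scope.
Local Open Scope sb_scope.

Lemma addKl {A : skew_brace} (x y : A) : x + (- x + y) = y.
Proof. rewrite addA, addrN, add0r. reflexivity. Qed.
Lemma addNKl {A : skew_brace} (x y : A) : - x + (x + y) = y.
Proof. rewrite addA, addNr, add0r. reflexivity. Qed.
Lemma sub_eq0 {A : skew_brace} (u y : A) : u + - y = zero A -> u = y.
Proof. intro H. rewrite <- (addr0 u), <- (addNr y), addA, H, add0r. reflexivity. Qed.
Lemma add_eq0 {A : skew_brace} (x y : A) : x + y = zero A -> y = - x.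
Proof. intro H. rewrite <- (addNKl x y), H, addr0. reflexivity. Qed.
Lemma opp0 {A : skew_brace} : - zero A = zero A.
Proof. rewrite <- (add0r (- zero A)). apply addrN. Qed.
Lemma oppK {A : skew_brace} (x : A) : - - x = x.
Proof. symmetry. apply add_eq0. apply addNr. Qed.
Lemma oppD {A : skew_brace} (x y : A) : - (x + y) = - y + - x.
Proof. symmetry. apply add_eq0. rewrite <- addA, addKl. apply addrN. Qed.

Hint Rewrite <- @addA : sb.
Hint Rewrite @addKl @addNKl @oppD @oppK @opp0 @addrN @addNr @add0r @addr0 : sb.
Ltac simp := autorewrite with sb; try reflexivity.

Lemma lam_add {A : skew_brace} (a b c : A) : lam a (b + c) = lam a b + lam a c.
Proof. unfold lam. rewrite brace_compat. simp. Qed.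
Lemma circ_lam {A : skew_brace} (a b : A) : a ** b = a + lam a b.
Proof. unfold lam. simp. Qed.
Lemma lam_circ {A : skew_brace} (a b c : A) : lam (a ** b) c = lam a (lam b c).
Proof.
  unfold lam at 2 3.
  assert (E : (a ** b) ** c = a ** b + - a + a ** (- b + b ** c)).
  { rewrite <- brace_compat, addKl, circA. reflexivity. }
  unfold lam. rewrite E. simp.
Qed.
Lemma lam_zero_l {A : skew_brace} (y : A) : lam (zero A) y = y.
Proof. unfold lam. rewrite opp0, add0r, circ0r. reflexivity. Qed.
Lemma lam_inv {A : skew_brace} (a y : A) : lam a (lam (cinv a) y) = y.
Proof. rewrite <- lam_circ, circrV. apply lam_zero_l. Qed.
Lemma cinv_uniq {A : skew_brace} (x y : A) : x ** y = zero A -> y = cinv x.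
Proof. intro H. rewrite <- (circ0r y), <- (circVr x), <- circA, H, circr0. reflexivity. Qed.
Lemma cinvK {A : skew_brace} (y : A) : cinv (cinv y) = y.
Proof. symmetry. apply cinv_uniq. apply circVr. Qed.

Lemma gen_sub {A : skew_brace} (X : A -> Prop) : is_add_subgroup A (gen_add A X).
Proof.
  unfold gen_add. split; [|split].
  - intros S [H0 _] _. exact H0.
  - intros x y Hx Hy S HS HX. destruct HS as [? [Ha ?]].
    apply Ha; [apply Hx|apply Hy]; auto; repeat split; auto.
  - intros x Hx S HS HX. destruct HS as [? [? Ho]]. apply Ho. apply Hx; auto; repeat split; auto.
Qed.
Lemma gen_in {A : skew_brace} (X : A -> Prop) x : X x -> gen_add A X x.
Proof. intros Hx S _ HX. auto. Qed.

Lemma full_sub {A : skew_brace} : is_add_subgroup A (full_set A).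
Proof. unfold full_set. repeat split. Qed.

Lemma star_add {A : skew_brace} (x y w : A) :
  star x (y + w) = star x y + y + star x w + - y.
Proof. unfold star. rewrite lam_add. simp. Qed.

Lemma star_normal {A : skew_brace} (X : A -> Prop) z :
  star_set A X (full_set A) z -> forall y, star_set A X (full_set A) (y + z + - y).
Proof.
  intro Hz. pose proof (gen_sub (fun z => exists x y, X x /\ full_set A y /\ z = star x y)) as [G0 [GA GO]].
  apply Hz.
  - split; [|split].
    + intro y. simp. exact G0.
    + intros z1 z2 H1 H2 y.
      assert (E : y + (z1 + z2) + - y = (y + z1 + - y) + (y + z2 + - y)) by simp.
      rewrite E. apply GA; [apply H1|apply H2].
    + intros z1 H1 y.
      assert (E : y + - z1 + - y = - (y + z1 + - y)) by simp.
      rewrite E. apply GO; apply H1.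
  - intros g [x [w [Hx [_ ->]]]] y.
    assert (E : y + star x w + - y = - star x y + star x (y + w)).
    { rewrite star_add. simp. }
    rewrite E. apply GA; [apply GO|]; apply gen_in; exists x; eexists; repeat split; eauto.
Qed.

Lemma R_sub {A : skew_brace} n : is_add_subgroup A (right_series A n).
Proof. destruct n as [|[|n]]; simpl; try apply full_sub. apply gen_sub. Qed.
Lemma R_normal {A : skew_brace} n x : right_series A n x -> forall y, right_series A n (y + x + - y).
Proof.
  destruct n as [|[|n]]; simpl; intros; try exact I.
  apply star_normal; auto.
Qed.
Lemma R_comm {A : skew_brace} n (x a : A) : right_series A n x -> right_series A n (comm_add a x).
Proof.
  intro H. unfold comm_add. destruct (@R_sub A n) as [_ [GA GO]].
  apply GA; [apply R_normal|apply GO]; auto.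
Qed.
Lemma R_star {A : skew_brace} n (x y : A) : (1 <= n)%nat -> right_series A n x ->
  right_series A (S n) (star x y).
Proof.
  intros Hn H. destruct n as [|n]; [lia|]. simpl.
  apply gen_in. exists x, y. repeat split; auto.
Qed.
Lemma L_star {A : skew_brace} n (x y : A) : (1 <= n)%nat -> left_series A n y ->
  left_series A (S n) (star x y).
Proof.
  intros Hn H. destruct n as [|n]; [lia|]. simpl.
  apply gen_in. exists x, y. repeat split; auto.
Qed.
Lemma lcs_comm {A : skew_brace} n (x y : A) : (1 <= n)%nat -> lcs A n y ->
  lcs A (S n) (comm_add x y).
Proof.
  intros Hn H. destruct n as [|n]; [lia|]. simpl.
  apply gen_in. exists x, y. repeat split; auto.
Qed.

Lemma I_star_r {A : skew_brace} I (HI : is_ideal A I) (x y : A) : I x -> I (star x y).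
Proof.
  intro Hx. destruct HI as [[I0 [IA IO]] [IL [IN IC]]].
  set (x' := (cinv y ** x) ** cinv (cinv y)).
  assert (Hx' : I x') by (apply IC; auto).
  assert (E : x ** y = y + lam y x').
  { rewrite <- circ_lam. unfold x'. rewrite cinvK, !circA, circrV, circ0r. reflexivity. }
  assert (E2 : star x y = - x + (y + lam y x' + - y)).
  { unfold star, lam at 1. rewrite E. simp. }
  rewrite E2. apply IA; auto.
Qed.
Lemma I_star_l {A : skew_brace} I (HI : is_ideal A I) (x y : A) : I y -> I (star x y).
Proof.
  intro Hy. destruct HI as [[I0 [IA IO]] [IL [IN IC]]]. unfold star. apply IA; auto.
Qed.
Lemma I_comm {A : skew_brace} I (HI : is_ideal A I) (a x : A) : I x -> I (comm_add a x).
Proof.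
  intro Hx. destruct HI as [[I0 [IA IO]] [IL [IN IC]]]. unfold comm_add. apply IA; auto.
Qed.

Definition socp {A : skew_brace} (z : A) :=
  (forall y, star z y = zero A) /\ (forall y, comm_add y z = zero A).

Lemma comm0 {A : skew_brace} (y z : A) : comm_add y z = zero A -> y + z = z + y.
Proof.
  unfold comm_add. intro H. apply sub_eq0 in H. transitivity ((y + z + - y) + y); [simp|rewrite H; reflexivity].
Qed.
Lemma comm0' {A : skew_brace} (y z : A) : y + z = z + y -> comm_add y z = zero A.
Proof. unfold comm_add. intro H. rewrite H. simp. Qed.

Lemma soc_lam {A : skew_brace} (z y : A) : socp z -> lam z y = y.
Proof. intros [H _]. apply sub_eq0. apply H. Qed.
Lemma soc_circ {A : skew_brace} (z y : A) : socp z -> z ** y = z + y.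
Proof. intro H. rewrite circ_lam, soc_lam; auto. Qed.

Lemma soc_add {A : skew_brace} (z w : A) : socp z -> socp w -> socp (z + w).
Proof.
  intros Hz Hw. split; intro y.
  - unfold star. rewrite <- (soc_circ z w Hz), lam_circ, !soc_lam; auto. apply addrN.
  - apply comm0'. destruct Hz as [_ Hz]. destruct Hw as [_ Hw].
    rewrite addA, (comm0 _ _ (Hz y)), <- addA, (comm0 _ _ (Hw y)), addA. reflexivity.
Qed.

Lemma soc_opp {A : skew_brace} (z : A) : socp z -> socp (- z).
Proof.
  intros Hz. assert (E : - z = cinv z).
  { apply cinv_uniq. rewrite soc_circ; auto. apply addrN. }
  split; intro y.
  - unfold star. rewrite E.
    assert (lam (cinv z) y = y).
    { rewrite <- (lam_inv z y) at 2. rewrite (soc_lam z (lam (cinv z) y) Hz). reflexivity. }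
    rewrite H. apply addrN.
  - apply comm0'. destruct Hz as [_ Hz]. pose proof (comm0 _ _ (Hz y)) as C.
    transitivity (- z + (z + (y + - z))); [simp|].
    rewrite (addA z y (- z)), <- C. simp.
Qed.

Lemma soc_lamA {A : skew_brace} (a z : A) : socp z -> socp (lam a z).
Proof.
  intro Hz.
  assert (C : forall y, y + lam a z = lam a z + y).
  { intro y. rewrite <- (lam_inv a y). rewrite <- !lam_add.
    destruct Hz as [_ Hz]. rewrite (comm0 _ _ (Hz _)). reflexivity. }
  assert (E : (a ** z) ** cinv a = lam a z).
  { rewrite <- circA, (soc_circ z (cinv a) Hz), brace_compat, circrV, addr0, (circ_lam a z).
    rewrite (C a). simp. }
  split; intro y.
  - unfold star. rewrite <- E, !lam_circ, (soc_lam z _ Hz), lam_inv. apply addrN.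
  - apply comm0'. apply C.
Qed.

Lemma soc_star {A : skew_brace} (a z : A) : socp z -> socp (star a z).
Proof. intro Hz. unfold star. apply soc_add; [apply soc_lamA|apply soc_opp]; auto. Qed.

Lemma phase1 {A : skew_brace} I (HI : is_ideal A I) (m c : nat)
  (Hm : is_trivial A (right_series A m)) (Hc : is_trivial A (lcs A c)) :
  forall d1 n, (n + d1 = m)%nat -> (1 <= n)%nat -> forall d2 j, (j + d2 = c)%nat -> (1 <= j)%nat ->
  forall x, I x -> x <> zero A -> right_series A n x -> lcs A j x ->
  exists z, I z /\ z <> zero A /\ socp z.
Proof.
  induction d1 as [|d1 IH1]; intros n Hn n1.
  - intros d2 j Hj j1 x Ix nz Rx Lx. exfalso. apply nz. apply Hm. 
    replace m with n by lia. exact Rx.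
  - induction d2 as [|d2 IH2]; intros j Hj j1 x Ix nz Rx Lx.
    + exfalso. apply nz. apply Hc. replace c with j by lia. exact Lx.
    + destruct (classic (socp x)) as [Hs|Hs]; [exists x; auto|].
      unfold socp in Hs. apply not_and_or in Hs. destruct Hs as [Hs|Hs];
        apply not_all_ex_not in Hs; destruct Hs as [y Hy].
      * apply (IH1 (S n) ltac:(lia) ltac:(lia) (c - 1) 1 ltac:(lia) ltac:(lia) (star x y)); auto.
        -- apply I_star_r; auto.
        -- apply R_star; auto.
        -- exact Logic.I.
      * apply (IH2 (S j) ltac:(lia) ltac:(lia) (comm_add y x)); auto.
        -- apply I_comm; auto.
        -- apply R_comm; auto.
        -- apply lcs_comm; auto.
Qed.

Lemma phase2 {A : skew_brace} I (HI : is_ideal A I) (l : nat)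
  (Hl : is_trivial A (left_series A l)) :
  forall d n, (n + d = l)%nat -> (1 <= n)%nat ->
  forall z, I z -> z <> zero A -> socp z -> left_series A n z ->
  exists w, I w /\ w <> zero A /\ socp w /\ (forall a, star a w = zero A).
Proof.
  induction d as [|d IH]; intros n Hn n1 z Iz nz Sz Lz.
  - exfalso. apply nz. apply Hl. replace l with n by lia. exact Lz.
  - destruct (classic (forall a, star a z = zero A)) as [H|H]; [exists z; auto|].
    apply not_all_ex_not in H. destruct H as [a Ha].
    apply (IH (S n) ltac:(lia) ltac:(lia) (star a z)); auto.
    + apply I_star_l; auto.
    + apply soc_star; auto.
    + apply L_star; auto.
Qed.

Theorem mainTheorem7 (A : skew_brace) :
  nilpotent_type A -> star_nilpotent A ->
  (forall I : A -> Prop, is_ideal A I -> (exists x, I x /\ x <> zero A) ->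
     exists z, center A z /\ I z /\ z <> zero A) /\
  ((exists x : A, x <> zero A) -> exists z : A, center A z /\ z <> zero A).
Proof.
  intros [c Hc] [[l Hl] [m Hm]].
  assert (P1 : forall I : A -> Prop, is_ideal A I -> (exists x, I x /\ x <> zero A) ->
     exists z, center A z /\ I z /\ z <> zero A).
  { intros I HI [x [Ix nz]].
    destruct m as [|m']; [exfalso; apply nz; apply Hm; exact Logic.I|].
    destruct c as [|c']; [exfalso; apply nz; apply Hc; exact Logic.I|].
    destruct l as [|l']; [exfalso; apply nz; apply Hl; exact Logic.I|].
    destruct (phase1 I HI _ _ Hm Hc m' 1 ltac:(lia) ltac:(lia) c' 1 ltac:(lia) ltac:(lia)
                x Ix nz Logic.I Logic.I) as [z [Iz [nz' Sz]]].
    destruct (phase2 I HI _ Hl l' 1 ltac:(lia) ltac:(lia) z Iz nz' Sz Logic.I)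
      as [w [Iw [nw [Sw Lw]]]].
    exists w. split; [|auto].
    intro y. split; [apply Sw|split; [apply Lw|]].
    destruct Sw as [_ Cw]. apply comm0'. symmetry. apply comm0. apply Cw. }
  split; [exact P1|].
  intros [x nz].
  destruct (P1 (full_set A)) as [z [Cz [_ nz']]].
  - unfold is_ideal, is_add_subgroup, full_set. repeat split.
  - exists x. split; [exact Logic.I|auto].
  - exists z. auto.
Qed.
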